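(* Let $(\vec U,\le,{}^*,\vee,\wedge)$ be a universe of separations containing a separation system $\vec S$ (with induced order and involution), and let $\mathcal F\subseteq 2^{\vec S}$ be a set of stars. Let $(T,\alpha)$ be an irredundant $S$-tree over $\mathcal F$, let $x$ be a leaf of $T$, and let $\vec e$ be the edge of $T$ at $x$ oriented away from $x$. Assume $\vec r:=\alpha(\vec e)$ is nontrivial and nondegenerate and that $\alpha(\vec e\,')\neq\vec r$ for every $\vec e\,'\in\vec E(T)$ other than $\vec e$. Let $\vec s_0\in\vec S$ be $\mathcal F$-linked to $\vec r$, and let $\alpha':=f^{\vec r}_{\vec s_0}\circ\alpha$. Then $\alpha'$ is well defined with values in $\vec S$, and $(T,\alpha')$ is an $S$-tree over $\mathcal F\cup\{\{\overleftarrow s_0\}\}$ in which $\{\overleftarrow s_0\}$ is associated with $x$ but with no other leaf of $T$.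
   Context: A separation system $(\vec S,\le,{}^* )$ is a partially ordered set with an order-reversing involution ${}^*$; write $\overleftarrow s:=\vec s^{\,*}$, a separation is $s=\{\vec s,\overleftarrow s\}$, $S$ is the set of separations, $s$ is degenerate if $\vec s=\overleftarrow s$, and $\vec r$ is trivial in $\vec S$ if there is $s\in S$ with $\vec r<\vec s$ and $\vec r<\overleftarrow s$. A star is a nonempty $\sigma\subseteq\vec S$ with $\vec r\le\overleftarrow s$ for all distinct $\vec r,\vec s\in\sigma$. A universe of separations $(\vec U,\le,{}^*,\vee,\wedge)$ is a separation system in which any two elements have a supremum $\vee$ and infimum $\wedge$. An $S$-tree is a pair $(T,\alpha)$ with $T$ a finite tree with at least one edge and $\alpha:\vec E(T)\to\vec S$ ($\vec E(T)=\{(x,y):\{x,y\}\in E(T)\}$) with $\alpha(y,x)=\alpha(x,y)^*$; $\alpha(\vec F_t)$, $\vec F_t=\{(y,t):yt\in E(T)\}$, is associated with node $t$; it is over $\mathcal F$ if $\alpha(\vec F_t)\in\mathcal F$ for all $t$; it is irredundant if no node $t$ has distinct neighbours $t',t''$ with $\alpha(t',t)=\alpha(t'',t)$. For nontrivial nondegenerate $\vec r\in\vec S$, $S_{\ge\vec r}$ is the set of $s\in S$ with an orientation $\ge\vec r$ and $\vec S_{\ge\vec r}$ the set of their orientations. For $\vec s_0\ge\vec r$ in $\vec S$, the shifting map $f^{\vec r}_{\vec s_0}:\vec S_{\ge\vec r}\to\vec U$ is given by $f(\vec s)=\vec s\vee\vec s_0$ and $f(\overleftarrow s)=(\vec s\vee\vec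 s_0)^*$ for all $\vec s\in\vec S_{\ge\vec r}\setminus\{\overleftarrow r\}$ with $\vec s\ge\vec r$. $\vec s_0\in\vec S$ is linked to $\vec r$ if $\vec s_0\ge\vec r$ and every $\vec s\in\vec S$ with $\vec s\ge\vec r$, $\vec s\ne\overleftarrow r$ satisfies $\vec s\vee\vec s_0\in\vec S$. It is $\mathcal F$-linked to $\vec r$ if it is linked to $\vec r$ and for every star $\sigma\in\mathcal F$ with $\sigma\subseteq\vec S_{\ge\vec r}\setminus\{\overleftarrow r\}$ that has an element $\ge\vec r$, the image $f^{\vec r}_{\vec s_0}(\sigma)$ lies in $\mathcal F$. *)

(* Defs.v *)
From HB Require Import structures.
From mathcomp Require Import all_boot all_order.
Set Implicit Arguments. Unset Strict Implicit. Unset Printing Implicit Defensive.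
Import Order.TTheory.
Local Open Scope order_scope.

Section Defs.
Variables (disp : Order.disp_t) (U : latticeType disp) (star : U -> U).

Definition is_involution := (forall u, star (star u) = u) /\
  (forall u v, u <= v -> star v <= star u).

Definition closed_star (S : U -> Prop) := forall u, S u -> S (star u).

(* families of sets, membership up to extensional equality of sets *)
Definition set_eq (X Y : U -> Prop) := forall u, X u <-> Y u.
Definition inF (F : (U -> Prop) -> Prop) (X : U -> Prop) :=
  exists Y, F Y /\ set_eq Y X.
Definition singleton (a : U) : U -> Prop := fun u => u = a.
Definition add_single (F : (U -> Prop) -> Prop) (a : U) : (U -> Prop) -> Prop :=
  fun Y => F Y \/ set_eq Y (singleton a).

Definition is_star (S : U -> Prop) (sigma : U -> Prop) :=
  (forall u, sigma u -> S u) /\ (exists u, sigma u) /\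
  (forall r s, sigma r -> sigma s -> r <> s -> r <= star s).

Definition trivial_in (S : U -> Prop) (r : U) :=
  exists s, S s /\ r < s /\ r < star s.
Definition degenerate (r : U) := r = star r.

Definition Sge (S : U -> Prop) (r u : U) := S u /\ (r <= u \/ r <= star u).

Definition shift (r s0 u : U) : U :=
  if (r <= u) && (u != star r) then u `|` s0 else star (star u `|` s0).

Definition image (f : U -> U) (sigma : U -> Prop) : U -> Prop :=
  fun v => exists u, sigma u /\ v = f u.

Definition linked (S : U -> Prop) (r s0 : U) :=
  S s0 /\ r <= s0 /\
  (forall s, S s -> r <= s -> s <> star r -> S (s `|` s0)).

Definition F_linked (S : U -> Prop) (F : (U -> Prop) -> Prop) (r s0 : U) :=
  linked S r s0 /\
  (forall sigma, F sigma -> is_star S sigma ->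
     (forall u, sigma u -> Sge S r u /\ u <> star r) ->
     (exists u, sigma u /\ r <= u) ->
     inF F (image (shift r s0) sigma)).

Definition is_tree (V : finType) (adj : rel V) :=
  symmetric adj /\ irreflexive adj /\ (forall a b, connect adj a b) /\
  (forall c : seq V, uniq c -> 2 < size c -> ~~ cycle adj c).

Definition S_tree (S : U -> Prop) (V : finType) (adj : rel V) (alpha : V -> V -> U) :=
  is_tree adj /\ (exists a b, adj a b) /\
  (forall a b, adj a b -> S (alpha a b) /\ alpha b a = star (alpha a b)).

Definition assoc (V : finType) (adj : rel V) (alpha : V -> V -> U) (t : V) : U -> Prop :=
  fun u => exists y, adj y t /\ alpha y t = u.

Definition over_fam (F : (U -> Prop) -> Prop) (V : finType) (adj : rel V) (alpha : V -> V -> U) :=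
  forall t, inF F (assoc adj alpha t).

Definition irredundant (V : finType) (adj : rel V) (alpha : V -> V -> U) :=
  forall t t1 t2, adj t1 t -> adj t2 t -> t1 <> t2 -> alpha t1 t <> alpha t2 t.

End Defs.

Definition leaf (V : finType) (adj : rel V) (l : V) :=
  exists y, adj l y /\ forall z, adj l z -> z = y.

(* Main.v *)
Require Import Defs.
From HB Require Import structures.
From mathcomp Require Import all_boot all_order.
Import Order.TTheory.
Local Open Scope order_scope.

Lemma path_up (disp : Order.disp_t) (U : latticeType disp) (star : U -> U)
  (S : U -> Prop) (F : (U -> Prop) -> Prop)
  (V : finType) (adj : rel V) (alpha : V -> V -> U) (x y : V) :
  (forall sigma, F sigma -> is_star star S sigma) ->
  symmetric adj ->
  (forall a b, adj a b -> alpha b a = star (alpha a b)) ->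
  over_fam F adj alpha -> irredundant adj alpha ->
  (forall z, adj x z -> z = y) ->
  forall q z, path adj x (rcons q z) -> uniq (x :: rcons q z) ->
    alpha x y <= alpha (last x q) z.
Proof.
move=> hFs hsym hst hov hirr hx q; elim/last_ind: q => [|q w IH] z.
  by rewrite /= andbT => /hx -> _.
rewrite rcons_path last_rcons => /andP [hp1 hwz].
rewrite -rcons_cons rcons_uniq => /andP [hz hu].
have := IH w hp1 hu.
move: hp1; rewrite rcons_path => /andP [_ hvw].
set v := last x q.
have hvz : v <> z.
  move=> E; move: hz; rewrite -E; apply/negP/negPn.
  have : v \in x :: q by apply: mem_last.
  by rewrite !inE mem_rcons !inE => /orP [->|->]; rewrite ?orbT.
have hzw : adj z w by rewrite hsym.
case: (hov w) => Y [/hFs [_ [_ hstar]] hset].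
have Yv : Y (alpha v w) by apply/hset; exists v.
have Yz : Y (alpha z w) by apply/hset; exists z.
have := hstar _ _ Yv Yz (hirr _ _ _ hvw hzw hvz).
rewrite -(hst _ _ hzw) => h1 h2.
exact: le_trans h2 h1.
Qed.
Lemma edge_dir (disp : Order.disp_t) (U : latticeType disp) (star : U -> U)
  (S : U -> Prop) (F : (U -> Prop) -> Prop)
  (V : finType) (adj : rel V) (alpha : V -> V -> U) (x y : V) :
  (forall sigma, F sigma -> is_star star S sigma) ->
  symmetric adj -> irreflexive adj -> (forall a b, connect adj a b) ->
  (forall a b, adj a b -> alpha b a = star (alpha a b)) ->
  over_fam F adj alpha -> irredundant adj alpha ->
  (forall z, adj x z -> z = y) ->
  (forall a b, adj a b -> alpha x y <= alpha a b \/ alpha x y <= alpha b a) /\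
  (forall t, t <> x -> exists z, adj z t /\ alpha x y <= alpha z t).
Proof.
move=> hFs hsym hirf hconn hst hov hirr hx.
have PU := @path_up disp U star S F V adj alpha x y hFs hsym hst hov hirr hx.
split.
  move=> a b hab.
  have /connectP [p hp ha] := hconn x a; subst a.
  case: (shortenP hp) => p' hp' hu _ in hab *.
  case: (boolP (b \in x :: p')) => hb; last first.
    left; apply: PU.
      by rewrite rcons_path hp' hab.
    by rewrite -rcons_cons rcons_uniq hb hu.
  right; move: hb; rewrite inE => /orP [/eqP hbx|hb].
    subst b; apply: (PU [::]) => /=.
      by rewrite hsym hab.
    rewrite andbT inE; apply/negP => /eqP E; by move: hab; rewrite -E hirf.
  case/splitPr: hb hp' hu hab => p1 p2 hp' hu hab.
  have E : b = last x (rcons p1 b) by rewrite last_rcons.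
  rewrite {1}E.
  apply: PU.
    move: hp'; rewrite cat_path /= => /and3P [h1 h2 _].
    by rewrite !rcons_path last_rcons h1 h2 /= hsym.
  clear hp'; move: hu hab; rewrite -cat_rcons -cat_cons cat_uniq => /and3P [hu1 hh _].
  case: p2 hh => [|c p2] hh.
    by rewrite cats0 last_rcons hirf.
  move=> _; have -> : last x (rcons p1 b ++ c :: p2) = last c p2 by rewrite last_cat.
  rewrite -rcons_cons rcons_uniq hu1 andbT.
  apply/negP => hin; move/negP: hh; apply; apply/hasP.
  exists (last c p2); first by apply: mem_last.
  by [].
move=> t htx.
have /connectP [p hp ht] := hconn x t; subst t.
case: (shortenP hp) => p' hp' hu _ in htx *.
move: hp' hu htx; case/lastP: p' => [|q w] hp' hu htx; first by [].
exists (last x q); split.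
  by move: hp'; rewrite rcons_path last_rcons => /andP [].
by rewrite last_rcons; apply: PU.
Qed.

Theorem lemma4p3 (disp : Order.disp_t) (U : latticeType disp) (star : U -> U)
  (S : U -> Prop) (F : (U -> Prop) -> Prop)
  (V : finType) (adj : rel V) (alpha : V -> V -> U) (x y : V) (s0 : U) :
  is_involution star ->
  closed_star star S ->
  (forall sigma, F sigma -> is_star star S sigma) ->
  S_tree star S adj alpha ->
  over_fam F adj alpha ->
  irredundant adj alpha ->
  adj x y -> (forall z, adj x z -> z = y) ->
  ~ trivial_in star S (alpha x y) ->
  ~ degenerate star (alpha x y) ->
  (forall a b, adj a b -> (a, b) <> (x, y) -> alpha a b <> alpha x y) ->
  S s0 ->
  F_linked star S F (alpha x y) s0 ->
  let alpha' := fun a b => shift star (alpha x y) s0 (alpha a b) in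
  (forall a b, adj a b -> Sge star S (alpha x y) (alpha a b)) /\
  S_tree star S adj alpha' /\
  over_fam (add_single F (star s0)) adj alpha' /\
  set_eq (assoc adj alpha' x) (singleton (star s0)) /\
  (forall l, leaf adj l -> l <> x ->
     ~ set_eq (assoc adj alpha' l) (singleton (star s0))).
Proof.
move=> [hss hrev] hcl hFs htree hov hirr hxy hx hnt hnd hdiff hs0
  [[_ [hrs0 hlink]] hFl] alpha'.
have [htr [hex hedge]] := htree.
have [hsym [hirf [hconn _]]] := htr.
have hst : forall a b, adj a b -> alpha b a = star (alpha a b).
  by move=> a b /hedge [].
have hSa : forall a b, adj a b -> S (alpha a b) by move=> a b /hedge [].
have [hdir hup] := @edge_dir disp U star S F V adj alpha x y hFs hsym hirf hconn
  hst hov hirr hx.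
set r := alpha x y in hdir hup hnt hnd hdiff hrs0 hlink hFl alpha' *.
have hSge : forall a b, adj a b -> Sge star S r (alpha a b).
  move=> a b hab; split; first exact: hSa.
  by case: (hdir a b hab) => h; [left|right; rewrite -hst].
have NT : forall v, S v -> r <= v -> r <= star v -> v = r \/ v = star r.
  move=> v Sv h1 h2; case: (eqVneq v r) => [->|hvr]; first by left.
  case: (eqVneq (star v) r) => [E|hsvr]; first by right; rewrite -E hss.
  exfalso; apply: hnt; exists v; split => //.
  by rewrite !lt_neqAle h1 h2 eq_sym hvr eq_sym hsvr.
have hshS : forall u, Sge star S r u -> S (shift star r s0 u).
  move=> u [Su hu]; rewrite /shift; case: ifP => [/andP [h1 /eqP h2]|hb].
    exact: hlink.
  apply: (hcl); apply: (hlink); first exact: (hcl).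
    case: (eqVneq u (star r)) => [->|hne]; first by rewrite hss.
    move: hb; rewrite hne andbT => hb.
    by case: hu => // h; rewrite h in hb.
  move=> E; have E' : u = r by rewrite -(hss u) E hss.
  case: (eqVneq u (star r)) => [hE|hne]; first by apply: hnd; rewrite /degenerate -{1}E'.
  by move: hb; rewrite hne E' lexx.
have hshstar : forall u, Sge star S r u ->
    shift star r s0 (star u) = star (shift star r s0 u).
  move=> u [Su hu]; rewrite /shift.
  case: ifP => [/andP [hB1 /eqP hB2]|hB]; case: ifP => [/andP [hA1 /eqP hA2]|hA].
  - case: (NT u Su hA1 hB1) => E; last by case: (hA2 E).
    by case: hB2; rewrite E.
  - by rewrite hss.
  - by rewrite hss.
  - exfalso.
    case: (eqVneq u (star r)) => [E|hne].
      by move: hB; rewrite E hss lexx /= => /negbFE /eqP E2; apply: hnd.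
    move: hA; rewrite hne andbT => hA.
    case: hu => h; first by rewrite h in hA.
    move: hB; rewrite h /= => /negbFE /eqP E.
    have E' : u = r by rewrite -(hss u) E hss.
    by move: hA; rewrite E' lexx.
have hsr : shift star r s0 (star r) = star s0.
  by rewrite /shift eqxx andbF hss (join_r hrs0).
have hx4 : set_eq (assoc adj alpha' x) (singleton (star s0)).
  move=> u; split.
    case=> z [hzx <-]; rewrite hsym in hzx; have E := hx z hzx; subst z.
    by rewrite /alpha' (hst _ _ hxy) hsr.
  move=> ->; exists y; split; first by rewrite hsym.
  by rewrite /alpha' (hst _ _ hxy) hsr.
have hne : forall t z, adj z t -> t <> x -> alpha z t <> star r.
  move=> t z hzt htx E; apply: (hdiff t z); first by rewrite hsym.
    by case=> E1 _; apply: htx.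
  by rewrite (hst _ _ hzt) E hss.
split; first exact: hSge.
split.
  split; first exact: htr.
  split; first exact: hex.
  move=> a b hab; split; first by apply: hshS; apply: hSge.
  by rewrite /alpha' (hst _ _ hab) hshstar //; apply: hSge.
split.
  move=> t; case: (eqVneq t x) => [->|/eqP htx].
    exists (singleton (star s0)); split; first by right.
    by move=> u; split => h; apply/(hx4 u).
  case: (hov t) => Y [FY hY].
  have hYsn : forall u, Y u -> Sge star S r u /\ u <> star r.
    move=> u /hY [z [hzt <-]]; split; first exact: hSge.
    exact: (hne t z hzt).
  have hex' : exists u, Y u /\ r <= u.
    have [z [hzt hrz]] := hup t htx.
    by exists (alpha z t); split => //; apply/hY; exists z.
  have [Z [FZ hZ]] := hFl Y FY (hFs Y FY) hYsn hex'.
  exists Z; split; first by left.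
  move=> u; split.
    move/hZ => [v [Yv ->]]; move/hY: Yv => [z [hzt <-]].
    by exists z.
  case=> z [hzt <-]; apply/hZ; exists (alpha z t); split => //.
  by apply/hY; exists z.
split; first exact: hx4.
move=> l _ hlx hE.
have [z [hzl hrz]] := hup l hlx.
have : assoc adj alpha' l (alpha' z l) by exists z.
move/hE; rewrite /singleton /alpha' /shift.
have hun := hne l z hzl hlx.
rewrite hrz /=; have -> : (alpha z l != star r) = true by apply/eqP.
move=> hU.
have h1 : s0 <= star s0 by rewrite -hU leUr.
have h2 : r <= star s0 by apply: le_trans hrz _; rewrite -hU leUl.
case: (eqVneq r s0) => [E|hne1].
  by apply: hun; rewrite E -hU -E (join_l hrz).
case: (eqVneq r (star s0)) => [E2|hne2].
  by move/eqP: hne1; apply; apply: le_anti; rewrite hrs0 /= E2.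
apply: hnt; exists s0; split => //.
by rewrite !lt_neqAle hne1 hne2 hrs0 h2.
Qed.
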